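(* Let $p$ be a prime and $G$ an extraspecial $p$-group. Then the only subsets of $G$ of the form $w(G)$ with $d\ge1$ and $w\in F_d$ are $\{1\}$, $Z(G)$ and $G$.
   Context: A special $p$-group is a finite $p$-group whose center, derived subgroup and Frattini subgroup coincide and are elementary abelian; it is extraspecial if $|Z(G)|=p$. $F_d$ is the free group on $d$ letters and $w(G)$ is the image of the word map $G^d\to G$ given by evaluating $w$. *)

(* Defs.v *)
From mathcomp Require Import all_boot all_fingroup all_solvable.
Set Implicit Arguments. Unset Strict Implicit. Unset Printing Implicit Defensive.
Local Open Scope group_scope.

(* Words in d letters: terms of the free group F_d (every element of F_d is
   represented by such a term, and evaluation factors through F_d). *)
Inductive word (d : nat) : Type :=
  | WVar of 'I_d
  | WOne
  | WMul of word d & word d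
  | WInv of word d.

Fixpoint eval_word (gT : finGroupType) d (x : 'I_d -> gT) (w : word d) : gT :=
  match w with
  | WVar i => x i
  | WOne => 1
  | WMul u v => eval_word x u * eval_word x v
  | WInv u => (eval_word x u)^-1
  end.

Definition word_image (gT : finGroupType) d (w : word d) (G : {set gT}) : {set gT} :=
  [set x | [exists f : {ffun 'I_d -> gT}, [forall i, f i \in G] && (eval_word f w == x)]].

(* Main.v *)
Require Import Defs.
From mathcomp Require Import all_boot all_fingroup all_solvable.
From Stdlib Require Import Classical.
Set Implicit Arguments. Unset Strict Implicit. Unset Printing Implicit Defensive.
Local Open Scope group_scope.

Fixpoint es (M d : nat) (i : 'I_d) (w : word d) : nat :=
  match w with
  | WVar j => nat_of_bool (j == i)
  | WOne => 0
  | WMul u v => (es M i u + es M i v)%N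
  | WInv u => (M - (es M i u %% M))%N
  end.

Definition upd (gT : finGroupType) d (h : {ffun 'I_d -> gT}) i (a : gT) :=
  [ffun j => if j == i then a else h j].

Lemma esV (gT : finGroupType) (G : {group gT}) d (i : 'I_d) u a :
  a \in G -> a ^+ es #|G| i (WInv u) = (a ^+ es #|G| i u)^-1.
Proof.
move=> aG /=; apply/eqP; rewrite eq_sym eq_invg_mul.
set e := es _ _ _.
rewrite -[a ^+ e](expg_mod _ (expg_cardG aG)).
by rewrite -expgD subnKC ?expg_cardG // ltnW // ltn_mod cardG_gt0.
Qed.

Lemma eval_in (gT : finGroupType) (G : {group gT}) d (h : 'I_d -> gT) w :
  (forall j, h j \in G) -> eval_word h w \in G.
Proof.
move=> hG; elim: w => /= [j|| u IHu v IHv | u IHu]; rewrite ?group1 ?groupM ?groupV //.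
Qed.

Lemma eval_one (gT : finGroupType) d w : eval_word (fun _ : 'I_d => (1 : gT)) w = 1.
Proof. by elim: w => /= [j|| u -> v -> | u ->]; rewrite ?mulg1 ?invg1. Qed.

Lemma eval_single (gT : finGroupType) (G : {group gT}) d (i : 'I_d) a w :
  a \in G -> eval_word (fun j => if j == i then a else 1) w = a ^+ es #|G| i w.
Proof.
move=> aG; elim: w => [j|| u IHu v IHv | u IHu].
- by rewrite /=; case: (j == i).
- by [].
- by rewrite /= IHu IHv expgD.
- by rewrite esV //= IHu.
Qed.

Lemma upd_in (gT : finGroupType) (G : {group gT}) d (h : {ffun 'I_d -> gT}) i a :
  (forall j, h j \in G) -> a \in G -> forall j, upd h i a j \in G.
Proof. by move=> hG aG j; rewrite ffunE; case: (j == i). Qed.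

Lemma zC (gT : finGroupType) (G : {group gT}) z x :
  z \in 'Z(G) -> x \in G -> z * x = x * z.
Proof. by move=> /centerP[_ cz] xG; apply: cz. Qed.

Lemma commZ (gT : finGroupType) (G : {group gT}) z x :
  z \in 'Z(G) -> x \in G -> commute x z.
Proof. by move=> zZ xG; apply/esym/(zC zZ xG). Qed.

Lemma evalL (gT : finGroupType) (G : {group gT}) d w (h : {ffun 'I_d -> gT}) i a :
  (forall x y, x \in G -> y \in G -> [~ x, y] \in 'Z(G)) ->
  (forall j, h j \in G) -> a \in G ->
  exists2 c, c \in 'Z(G) & forall k,
    eval_word (upd h i (a ^+ k)) w
      = eval_word (upd h i 1) w * (a ^+ es #|G| i w) ^+ k * c ^+ k.
Proof.
move=> cZ hG aG.
have ZG : forall z, z \in 'Z(G) -> z \in G by move=> z /(subsetP (center_sub G)).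
have QG : forall u, eval_word (upd h i 1) u \in G.
  by move=> u; apply: eval_in; apply: upd_in.
elim: w => [j|| u IHu v IHv | u IHu].
- exists 1; first exact: group1.
  move=> k; case: (eqVneq j i) => [->|ne]; rewrite /= !ffunE ?eqxx ?(negPf ne) /=.
    by rewrite expg1 expg1n mul1g mulg1.
  by rewrite expg0 !expg1n !mulg1.
- by exists 1; rewrite ?group1 // => k; rewrite /= expg0 !expg1n !mulg1.
- have [cu cuZ Eu] := IHu; have [cv cvZ Ev] := IHv.
  set bu := a ^+ es #|G| i u; set bv := a ^+ es #|G| i v.
  set Qu := eval_word (upd h i 1) u; set Qv := eval_word (upd h i 1) v.
  have buG : bu \in G by rewrite groupX.
  have bvG : bv \in G by rewrite groupX.
  have QuG : Qu \in G := QG u.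
  have QvG : Qv \in G := QG v.
  have rZ : [~ bu, Qv] \in 'Z(G) by apply: cZ.
  exists ([~ bu, Qv] * cu * cv).
  exact: (groupM (groupM rZ cuZ) cvZ).
  move=> k; rewrite /= Eu Ev -/bu -/bv -/Qu -/Qv expgD -/bu -/bv.
  rewrite expgMn; last by apply: commuteX2; apply: commute_refl.
  rewrite (expgMn _ (commZ cvZ (groupM (ZG _ rZ) (ZG _ cuZ)))).
  rewrite (expgMn _ (commZ cuZ (ZG _ rZ))).
  have XG : bu ^+ k \in G by rewrite groupX.
  have YG : bv ^+ k \in G by rewrite groupX.
  have z1Z : cu ^+ k \in 'Z(G) by rewrite groupX.
  have rkZ : [~ bu, Qv] ^+ k \in 'Z(G) by rewrite groupX.
  have E1 : [~ bu, Qv] ^+ k = [~ bu ^+ k, Qv].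
    by rewrite (commXg k (commZ rZ buG)).
  rewrite !mulgA -(mulgA _ (cu ^+ k) Qv) (zC z1Z QvG) mulgA.
  rewrite -(mulgA _ (cu ^+ k) (bv ^+ k)) (zC z1Z YG) mulgA.
  rewrite -(mulgA Qu (bu ^+ k) Qv) (commgC (bu ^+ k) Qv) -E1 !mulgA.
  by rewrite -(mulgA _ _ (bv ^+ k)) (zC rkZ YG) mulgA.
- have [c cZc Eu] := IHu.
  set bu := a ^+ es #|G| i u; set Qu := eval_word (upd h i 1) u.
  have buG : bu \in G by rewrite groupX.
  have QuG : Qu \in G := QG u.
  have rZ : [~ bu^-1, Qu^-1] \in 'Z(G) by apply: cZ; rewrite groupV.
  exists ([~ bu^-1, Qu^-1] * c^-1).
    by apply: groupM; [exact: rZ | rewrite groupV].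
  move=> k; rewrite /= Eu -/bu -/Qu (esV _ _ aG) -/bu.
  rewrite (expgMn _ (commZ (groupVr cZc) (ZG _ rZ))).
  rewrite !invMg -[(c ^+ k)^-1]expgVn -[(bu ^+ k)^-1]expgVn.
  have XG : bu^-1 ^+ k \in G by rewrite groupX ?groupV.
  have zkZ : c^-1 ^+ k \in 'Z(G) by rewrite groupX ?groupV.
  rewrite (zC zkZ (groupM XG (groupVr QuG))).
  have E1 : [~ bu^-1, Qu^-1] ^+ k = [~ bu^-1 ^+ k, Qu^-1].
    by rewrite (commXg k (commZ rZ (groupVr buG))).
  by rewrite (commgC (bu^-1 ^+ k) Qu^-1) -E1 !mulgA.
Qed.

Lemma eval_ext (gT : finGroupType) d (h h' : 'I_d -> gT) w :
  h =1 h' -> eval_word h w = eval_word h' w.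
Proof. by move=> e; elim: w => /= [j|| u -> v -> | u ->]. Qed.

Lemma memW (gT : finGroupType) (G : {group gT}) d (w : word d) (f : {ffun 'I_d -> gT}) :
  (forall j, f j \in G) -> eval_word f w \in word_image w G.
Proof.
move=> fG; rewrite inE; apply/existsP; exists f; rewrite eqxx andbT.
by apply/forallP.
Qed.

Lemma memWP (gT : finGroupType) (G : {group gT}) d (w : word d) x :
  x \in word_image w G -> exists2 f : {ffun 'I_d -> gT}, (forall j, f j \in G) & eval_word f w = x.
Proof.
rewrite inE => /existsP[f /andP[/forallP fG /eqP <-]]; by exists f.
Qed.

Lemma ffun_ind (gT : finGroupType) d (P : {ffun 'I_d -> gT} -> Prop) :
  P [ffun=> 1] -> (forall h i, P (upd h i 1) -> P h) -> forall h, P h.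
Proof.
move=> P1 Pst h.
suff: forall n (h : {ffun 'I_d -> gT}), #|[set j | h j != 1]| <= n -> P h.
  by move=> /(_ _ h (leqnn _)).
elim=> [|n IH] {}h.
  rewrite leqn0 cards_eq0 => /eqP e.
  suff -> : h = [ffun=> 1] by [].
  apply/ffunP => j; rewrite ffunE; apply/eqP.
  by move/setP/(_ j): e; rewrite !inE => /negbFE.
case: (pickP [pred j | h j != 1]) => [i /= hi | none] hn.
  apply: (Pst h i); apply: IH.
  have -> : [set j | upd h i 1 j != 1] = [set j | h j != 1] :\ i.
    apply/setP => j; rewrite !inE ffunE.
    by case: (eqVneq j i) => [->|]; rewrite ?eqxx.
  have := cardsD1 i [set j | h j != 1]; rewrite inE hi => e.
  by move: hn; rewrite e add1n ltnS.
apply: IH; suff -> : [set j | h j != 1] = set0 by rewrite cards0.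
by apply/setP => j; rewrite !inE; have := none j.
Qed.

Theorem theorem4p9 (gT : finGroupType) (G : {group gT}) (p : nat) :
  prime p -> p.-group G -> extraspecial G ->
  forall (d : nat) (w : word d), 1 <= d ->
    word_image w G = [1 gT] \/ word_image w G = 'Z(G) \/ word_image w G = G.
Proof.
move=> pr pG [[PhiZ derZ] primeZ] d w d1.
have cZ : forall x y, x \in G -> y \in G -> [~ x, y] \in 'Z(G).
  by move=> x y xG yG; rewrite -derZ derg1 mem_commg.
have powZ : forall a, a \in G -> a ^+ p \in 'Z(G).
  move=> a aG; rewrite -PhiZ (Phi_joing pG); apply: (subsetP (joing_subr _ _)).
  by have := Mho_p_elt 1 aG (mem_p_elt pG aG); rewrite expn1.
have ZG : forall z, z \in 'Z(G) -> z \in G by move=> z /(subsetP (center_sub G)).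
have imG : word_image w G \subset G.
  by apply/subsetP => x /memWP[f fG <-]; apply: eval_in.
have one_in : (1 : gT) \in word_image w G.
  have h1 : forall j, ([ffun=> 1] : {ffun 'I_d -> gT}) j \in G.
    by move=> j; rewrite ffunE group1.
  have := memW w h1.
  by rewrite (@eval_ext _ _ _ (fun _ => 1)) ?eval_one // => j; rewrite ffunE.
case: (boolP [exists i, ~~ (p %| es #|G| i w)]) => [/existsP[i ndv] | /existsPn alldv].
  right; right; apply/eqP; rewrite eqEsubset imG /=.
  set n := es #|G| i w.
  have coG : coprime #|G| n.
    rewrite (card_pgroup pG) coprimeXl // prime_coprime //.
  apply/subsetP => g gG.
  set m := expg_invn G n.
  have gmG : g ^+ m \in G by rewrite groupX.
  have hG : forall j, ([ffun j => if j == i then g ^+ m else 1] : {ffun 'I_d -> gT}) j \in G.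
    by move=> j; rewrite ffunE; case: (j == i).
  have := memW w hG.
  rewrite (@eval_ext _ _ _ (fun j => if j == i then g ^+ m else 1)); last first.
    by move=> j; rewrite ffunE.
  rewrite (eval_single _ _ gmG) -/n expgAC.
  by rewrite (expgK coG gG).
have esZ : forall a j, a \in G -> a ^+ es #|G| j w \in 'Z(G).
  move=> a j aG; have := alldv j; rewrite negbK => /dvdnP[q ->].
  by rewrite mulnC expgM groupX // powZ.
have inZ : forall h : {ffun 'I_d -> gT}, (forall j, h j \in G) -> eval_word h w \in 'Z(G).
  apply: ffun_ind.
    move=> _; rewrite (@eval_ext _ _ _ (fun _ => 1)) ?eval_one ?group1 // => j.
    by rewrite ffunE.
  move=> h i IH hG.
  have [c cZc E] := evalL w i cZ hG (hG i).
  have Eh : upd h i (h i ^+ 1) = h.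
    by apply/ffunP => j; rewrite ffunE expg1; case: eqP => // ->.
  have := E 1%N; rewrite Eh => ->.
  rewrite !expg1 !groupM ?esZ //; apply: IH.
  by apply: upd_in.
case: (classic (exists (h : {ffun 'I_d -> gT}) i, (forall j, h j \in G) /\
          eval_word h w != eval_word (upd h i 1) w)) => [[h [i [hG ne]]] | none].
  right; left; apply/eqP; rewrite eqEsubset.
  apply/andP; split.
    by apply/subsetP => x /memWP[f fG <-]; apply: inZ.
  have [c cZc E] := evalL w i cZ hG (hG i).
  set Q := eval_word (upd h i 1) w in E ne.
  set b := h i ^+ es #|G| i w in E.
  have bZ : b \in 'Z(G) by apply: esZ.
  have QZ : Q \in 'Z(G) by apply: inZ; apply: upd_in.
  have Eh : upd h i (h i ^+ 1) = h.
    by apply/ffunP => j; rewrite ffunE expg1; case: eqP => // ->.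
  have X1 : b * c != 1.
    apply: contra ne => /eqP bc1; apply/eqP.
    by rewrite -Eh E !expg1 -mulgA bc1 mulg1.
  have XZ : b * c \in 'Z(G) by rewrite groupM.
  have ZX : 'Z(G) \subset <[b * c]>.
    have sXZ : <[b * c]> \subset 'Z(G) by rewrite cycle_subG.
    suff e : <[b * c]> = 'Z(G) by rewrite e.
    apply/eqP; rewrite eqEcard sXZ /=.
    rewrite (prime_nt_dvdP primeZ _ (cardSg sXZ)) //.
    by rewrite -trivg_card1 cycle_eq1.
  apply/subsetP => z zZ.
  have : Q^-1 * z \in <[b * c]> by apply: (subsetP ZX); rewrite groupM ?groupV.
  case/cycleP => k ek.
  have := memW w (upd_in i (hG) (groupX k (hG i))).
  have cbc : commute b c by apply: (zC bZ); rewrite ZG.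
  by rewrite E -mulgA -(expgMn _ cbc) -ek mulKVg.
left; apply/eqP; rewrite eqEsubset sub1set one_in andbT.
apply/subsetP => x /memWP[f fG <-]; rewrite inE.
move: f fG; apply: ffun_ind.
  by move=> _; rewrite (@eval_ext _ _ _ (fun _ => 1)) ?eval_one // => j; rewrite ffunE.
move=> h i IH hG.
have : eval_word h w = eval_word (upd h i 1) w.
  apply/eqP; apply/negPn/negP => ne; apply: none; by exists h, i.
by move=> ->; apply: IH; apply: upd_in.
Qed.
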